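(* Let $m\ge3$ and let $c_j(a)$, $0\le j\le m+1$, be as defined in the context. Then: (i) each $c_j(a)$ is a polynomial in $a_1,\dots,a_m$; (ii) $c_0(a)$ is independent of $a$; (iii) for $1\le j\le m$, $c_j(a)$ depends only on $a_1,\dots,a_j$ and is a non-constant affine-linear function of $a_j$ (for fixed $a_1,\dots,a_{j-1}$).
   Context: $a=(a_1,\dots,a_m)\in\mathbb C^m$, $P(z)=a_1z^{m-1}+\dots+a_m$, $\binom{1/2}{k}=\frac{\frac12(\frac12-1)\cdots(\frac12-k+1)}{k!}$. For $j\ge1$, $1\le k\le j$, $b_{j,k}(a)$ is the coefficient of $z^{mk-j}$ in $\binom{1/2}{k}P(z)^k$ ($0$ if $mk-j<0$), $b_j(a)=\sum_{k=1}^jb_{j,k}(a)$, $\nu(a)=0$ for $m$ odd and $\nu(a)=b_{\frac m2+1}(a)$ for $m$ even. $g_j(\tau)=\sum_{k=1}^{j}b_{j,k}(a)\tau^{mk-j}(\tau^m+1)^{-(k-\frac12)}$. $K_{m,0}=\int_0^\infty(\sqrt{1+t^m}-t^{m/2})dt$; $K_{m,j}(a)=\int_0^\infty(g_j(t)-b_j(a)t^{\frac m2-j})dt$ for $1\le j\le\frac{m+1}2$; $K_{m,\frac m2+1}(a)=\int_0^\infty(g_{\frac m2+1}(t)-\frac{b_{\frac m2+1}(a)}{t+1})dt$ for $m$ even; $K_{m,j}(a)=\int_0^\infty g_j(t)dt$ for $j\ge\frac{m+3}2$. Then $c_j(a)=\frac1\pi\cos(\frac{(j-1)\pi}m)K_{m,j}(a)$,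 except $c_{\frac m2+1}(a)=-\frac{\nu(a)}m$ when $m$ is even. *)

(* Defs.v *)
From Stdlib Require Import Reals Arith List Lia ClassicalEpsilon Factorial.
Open Scope R_scope.

Definition Cplx := (R * R)%type.
Definition C0 : Cplx := (0, 0).
Definition C1 : Cplx := (1, 0).
Definition RtoC (r : R) : Cplx := (r, 0).
Definition Cadd (x y : Cplx) : Cplx := (fst x + fst y, snd x + snd y).
Definition Cmul (x y : Cplx) : Cplx :=
  (fst x * fst y - snd x * snd y, fst x * snd y + snd x * fst y).
Definition Cscale (r : R) (x : Cplx) : Cplx := (r * fst x, r * snd x).
Definition Csub (x y : Cplx) : Cplx := Cadd x (Cscale (-1) y).
Fixpoint Cpow (x : Cplx) (n : nat) : Cplx :=
  match n with O => C1 | S n => Cmul x (Cpow x n) end.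
Definition Csum {A : Type} (f : A -> Cplx) (l : list A) : Cplx :=
  fold_right (fun x acc => Cadd (f x) acc) C0 l.
Definition Cprod {A : Type} (f : A -> Cplx) (l : list A) : Cplx :=
  fold_right (fun x acc => Cmul (f x) acc) C1 l.

(* ---------- univariate polynomials over Cplx: coefficient lists, z^0 first ---------- *)
Fixpoint padd (p q : list Cplx) : list Cplx :=
  match p, q with
  | nil, _ => q
  | _, nil => p
  | x :: p', y :: q' => Cadd x y :: padd p' q'
  end.
Fixpoint pmul (p q : list Cplx) : list Cplx :=
  match p with
  | nil => nil
  | c :: p' => padd (map (Cmul c) q) (C0 :: pmul p' q)
  end.
Fixpoint ppow (p : list Cplx) (k : nat) : list Cplx :=
  match k with O => C1 :: nil | S k => pmul p (ppow p k) end.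
Definition pcoef (p : list Cplx) (n : nat) : Cplx := nth n p C0.

(* a = (a_1,...,a_m) is modelled as a function nat -> Cplx; only a 1..a m are used. *)
(* P(z) = a_1 z^(m-1) + ... + a_m : coefficient of z^i is a_(m-i), 0 <= i <= m-1 *)
Definition Ppoly (m : nat) (a : nat -> Cplx) : list Cplx :=
  map (fun i => a (m - i)%nat) (seq 0 m).

Fixpoint falling (x : R) (k : nat) : R :=
  match k with O => 1 | S k => falling x k * (x - INR k) end.
Definition binom_half (k : nat) : R := falling (1/2) k / INR (fact k).

Definition bjk (m : nat) (a : nat -> Cplx) (j k : nat) : Cplx :=
  if Nat.ltb (m * k) j then C0
  else Cscale (binom_half k) (pcoef (ppow (Ppoly m a) k) (m * k - j)).

Definition bj (m : nat) (a : nat -> Cplx) (j : nat) : Cplx :=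
  Csum (fun k => bjk m a j k) (seq 1 j).

Definition nu (m : nat) (a : nat -> Cplx) : Cplx :=
  if Nat.even m then bj m a (m / 2 + 1) else C0.

(* g_j(tau) = sum_k b_{j,k} tau^(mk-j) (tau^m+1)^(-(k-1/2)) ;
   when mk-j<0 the coefficient b_{j,k} is 0, so the term vanishes *)
Definition gj (m : nat) (a : nat -> Cplx) (j : nat) (tau : R) : Cplx :=
  Csum (fun k => Cscale (tau ^ (m * k - j) * Rpower (tau ^ m + 1) (- (INR k - 1/2)))
                        (bjk m a j k))
       (seq 1 j).

Definition is_int_0_inf (f : R -> R) (l : R) : Prop :=
  (forall x y, 0 < x -> x <= y -> inhabited (Riemann_integrable f x y)) /\
  (forall eps, 0 < eps -> exists d, 0 < d /\ exists M, 0 < M /\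
     forall x y (pr : Riemann_integrable f x y),
       0 < x -> x < d -> M < y -> Rabs (RiemannInt pr - l) < eps).

Definition Int0inf (f : R -> R) : R :=
  epsilon (inhabits 0) (is_int_0_inf f).

Definition CInt0inf (f : R -> Cplx) : Cplx :=
  (Int0inf (fun t => fst (f t)), Int0inf (fun t => snd (f t))).

Definition Kmj (m : nat) (a : nat -> Cplx) (j : nat) : Cplx :=
  if Nat.eqb j 0 then
    RtoC (Int0inf (fun t => sqrt (1 + t ^ m) - Rpower t (INR m / 2)))
  else if Nat.leb (2 * j) (m + 1) then
    CInt0inf (fun t => Csub (gj m a j t)
                            (Cscale (Rpower t (INR m / 2 - INR j)) (bj m a j)))
  else if andb (Nat.even m) (Nat.eqb (2 * j) (m + 2)) then
    CInt0inf (fun t => Csub (gj m a j t) (Cscale (/ (t + 1)) (bj m a j)))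
  else
    CInt0inf (gj m a j).

Definition cj (m : nat) (j : nat) (a : nat -> Cplx) : Cplx :=
  if andb (Nat.even m) (Nat.eqb (2 * j) (m + 2)) then
    Cscale (- / INR m) (nu m a)
  else
    Cscale (/ PI * cos ((INR j - 1) * PI / INR m)) (Kmj m a j).

Definition is_poly_fun (m : nat) (f : (nat -> Cplx) -> Cplx) : Prop :=
  exists l : list (Cplx * (nat -> nat)),
    forall a : nat -> Cplx,
      f a = Csum (fun ce => Cmul (fst ce) (Cprod (fun i => Cpow (a i) (snd ce i)) (seq 1 m))) l.

Definition upd (a : nat -> Cplx) (j : nat) (x : Cplx) : nat -> Cplx :=
  fun i => if Nat.eqb i j then x else a i.

(* Main.v *)
Require Import Defs.
From Stdlib Require Import Reals Lra Lia Psatz List Arith Ring Field ClassicalEpsilon ZArith FunctionalExtensionality.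
Open Scope R_scope.


Definition Copp (x : Cplx) : Cplx := Cscale (-1) x.

Lemma Cring : ring_theory C0 Defs.C1 Cadd Cmul Csub Copp (@eq Cplx).
Proof.
  constructor; intros;
  repeat match goal with x : Cplx |- _ => destruct x end;
  unfold Csub, Copp, C0, Defs.C1, Cadd, Cmul, Cscale; simpl; f_equal; ring.
Qed.
Add Ring Cring : Cring.

Lemma Cscale_mul r x : Cscale r x = Cmul (RtoC r) x.
Proof. destruct x; unfold Cscale, Cmul, RtoC; simpl; f_equal; ring. Qed.

Lemma RtoC_plus a b : RtoC (a + b) = Cadd (RtoC a) (RtoC b).
Proof. unfold RtoC, Cadd; simpl; f_equal; ring. Qed.
Lemma RtoC_mult a b : RtoC (a * b) = Cmul (RtoC a) (RtoC b).
Proof. unfold RtoC, Cmul; simpl; f_equal; ring. Qed.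
Lemma RtoC_minus a b : RtoC (a - b) = Csub (RtoC a) (RtoC b).
Proof. unfold RtoC, Csub, Cadd, Cscale; simpl; f_equal; ring. Qed.

Lemma Csum_app {A} (f : A -> Cplx) l1 l2 : Csum f (l1 ++ l2) = Cadd (Csum f l1) (Csum f l2).
Proof. induction l1; simpl. ring. rewrite IHl1; ring. Qed.

Lemma Csum_ext {A} (f g : A -> Cplx) l : (forall x, In x l -> f x = g x) -> Csum f l = Csum g l.
Proof. induction l; simpl; intros H; auto. rewrite H, IHl; auto. Qed.

Lemma Csum_plus {A} (f g : A -> Cplx) l : Csum (fun x => Cadd (f x) (g x)) l = Cadd (Csum f l) (Csum g l).
Proof. induction l; simpl. ring. rewrite IHl; ring. Qed.

Lemma Csum_mull {A} c (f : A -> Cplx) l : Csum (fun x => Cmul c (f x)) l = Cmul c (Csum f l).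
Proof. induction l; simpl. ring. rewrite IHl; ring. Qed.

Lemma Csum_map {A B} (f : B -> Cplx) (g : A -> B) l : Csum f (map g l) = Csum (fun x => f (g x)) l.
Proof. induction l; simpl; congruence. Qed.

Lemma Csum_zero {A} (f : A -> Cplx) l : (forall x, In x l -> f x = C0) -> Csum f l = C0.
Proof. induction l; simpl; intros H; auto. rewrite H, IHl; auto. ring. Qed.

Lemma pcoef_nil n : pcoef nil n = C0.
Proof. destruct n; reflexivity. Qed.

Lemma pcoef_padd p q n : pcoef (padd p q) n = Cadd (pcoef p n) (pcoef q n).
Proof.
  revert q n; induction p; intros q n.
  - simpl; rewrite pcoef_nil; ring.
  - destruct q. simpl; rewrite pcoef_nil; ring.
    destruct n. reflexivity. apply (IHp q n).
Qed.

Lemma pcoef_map c q n : pcoef (map (Cmul c) q) n = Cmul c (pcoef q n).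
Proof.
  revert n; induction q; intros n; simpl.
  - rewrite !pcoef_nil; ring.
  - destruct n; simpl. reflexivity. apply IHq.
Qed.

Lemma pcoef_cons0 c p n : pcoef (c :: p) (S n) = pcoef p n.
Proof. reflexivity. Qed.

Lemma Csum_seq_shift (f : nat -> Cplx) s n : Csum f (seq (S s) n) = Csum (fun i => f (S i)) (seq s n).
Proof. rewrite <- seq_shift, Csum_map; reflexivity. Qed.

Lemma pcoef_pmul p q n :
  pcoef (pmul p q) n = Csum (fun i => Cmul (pcoef p i) (pcoef q (n - i))) (seq 0 (S n)).
Proof.
  revert n; induction p; intros n; simpl pmul.
  - rewrite pcoef_nil, Csum_zero; auto. intros; rewrite pcoef_nil; ring.
  - rewrite pcoef_padd, pcoef_map.
    rewrite (seq_S_cons 0 (S n)) || idtac.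
    change (seq 0 (S n)) with (0%nat :: seq 1 n).
    change (Csum (fun i => Cmul (pcoef (a :: p) i) (pcoef q (n - i))) (0%nat :: seq 1 n))
      with (Cadd (Cmul (pcoef (a :: p) 0) (pcoef q (n - 0))) (Csum (fun i => Cmul (pcoef (a :: p) i) (pcoef q (n - i))) (seq 1 n))).
    rewrite Nat.sub_0_r. change (pcoef (a :: p) 0) with a. f_equal.
    destruct n.
    + simpl. unfold pcoef; simpl. ring.
    + rewrite pcoef_cons0, IHp, Csum_seq_shift. reflexivity.
Qed.

Definition mono m (e : nat -> nat) (a : nat -> Cplx) := Cprod (fun i => Cpow (a i) (e i)) (seq 1 m).
Definition pval m (l : list (Cplx * (nat -> nat))) a := Csum (fun ce => Cmul (fst ce) (mono m (snd ce) a)) l.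

Lemma is_poly_fun_iff m f : is_poly_fun m f <-> exists l, forall a, f a = pval m l a.
Proof. reflexivity. Qed.

Lemma poly_ext m f g : (forall a, f a = g a) -> is_poly_fun m f -> is_poly_fun m g.
Proof. intros E [l H]; exists l; intros a; rewrite <- E; apply H. Qed.

Lemma Cpow_add x n k : Cpow x (n + k) = Cmul (Cpow x n) (Cpow x k).
Proof. induction n; simpl. ring. rewrite IHn; ring. Qed.

Lemma Cprod_mul {A} (f g : A -> Cplx) l : Cprod (fun x => Cmul (f x) (g x)) l = Cmul (Cprod f l) (Cprod g l).
Proof. induction l; simpl. ring. rewrite IHl; ring. Qed.

Lemma Cprod_ext {A} (f g : A -> Cplx) l : (forall x, In x l -> f x = g x) -> Cprod f l = Cprod g l.
Proof. induction l; simpl; intros H; auto. rewrite H, IHl; auto. Qed.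

Lemma mono_add m e1 e2 a : mono m (fun i => (e1 i + e2 i)%nat) a = Cmul (mono m e1 a) (mono m e2 a).
Proof. unfold mono. rewrite <- Cprod_mul. apply Cprod_ext; intros; apply Cpow_add. Qed.

Lemma pval_app m l1 l2 a : pval m (l1 ++ l2) a = Cadd (pval m l1 a) (pval m l2 a).
Proof. apply Csum_app. Qed.

Definition lmul (l1 l2 : list (Cplx * (nat -> nat))) :=
  flat_map (fun x => map (fun y => (Cmul (fst x) (fst y), fun i => (snd x i + snd y i)%nat)) l2) l1.

Lemma pval_lmul m l1 l2 a : pval m (lmul l1 l2) a = Cmul (pval m l1 a) (pval m l2 a).
Proof.
  induction l1 as [|x l1 IH]; simpl. unfold pval; simpl; ring.
  unfold pval in *. simpl. rewrite Csum_app, IH, Csum_map. simpl.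
  rewrite <- Csum_mull.
  assert (E : Csum (fun x0 => Cmul (Cmul (fst x) (fst x0)) (mono m (fun i => (snd x i + snd x0 i)%nat) a)) l2
   = Csum (fun x0 => Cmul (Cmul (fst x) (mono m (snd x) a)) (Cmul (fst x0) (mono m (snd x0) a))) l2).
  { apply Csum_ext; intros; rewrite mono_add; ring. }
  rewrite E. rewrite Csum_mull, Csum_mull. ring.
Qed.

Lemma poly_add m f g : is_poly_fun m f -> is_poly_fun m g -> is_poly_fun m (fun a => Cadd (f a) (g a)).
Proof. intros [l1 H1] [l2 H2]; exists (l1 ++ l2); intros a; rewrite Csum_app, H1, H2; reflexivity. Qed.

Lemma poly_mul m f g : is_poly_fun m f -> is_poly_fun m g -> is_poly_fun m (fun a => Cmul (f a) (g a)).
Proof. intros [l1 H1] [l2 H2]; exists (lmul l1 l2); intros a; pose proof (pval_lmul m l1 l2 a) as P; unfold pval, mono in P; rewrite P, H1, H2; reflexivity. Qed.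

Lemma mono_zero m a : mono m (fun _ => 0%nat) a = Defs.C1.
Proof. unfold mono. generalize (seq 1 m); intros l; induction l as [|x l IH]; [reflexivity|]. unfold Cprod in *; cbn [fold_right]. rewrite IH. simpl; ring. Qed.

Lemma poly_const m c : is_poly_fun m (fun _ => c).
Proof. exists ((c, fun _ => 0%nat) :: nil); intros a.
  pose proof (mono_zero m a) as P; unfold mono in P; cbn [Csum fold_right fst snd]. rewrite P; ring. Qed.

Lemma mono_var_out a i s n : (i < s \/ s + n <= i)%nat ->
  Cprod (fun l => Cpow (a l) (if Nat.eqb l i then 1%nat else 0%nat)) (seq s n) = Defs.C1.
Proof.
  revert s; induction n; intros s H; [reflexivity|].
  cbn [seq]. unfold Cprod in *; cbn [fold_right]. rewrite IHn by lia.
  destruct (Nat.eqb s i) eqn:E. apply Nat.eqb_eq in E; lia. simpl; ring.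
Qed.

Lemma mono_var_in a i s n : (s <= i < s + n)%nat ->
  Cprod (fun l => Cpow (a l) (if Nat.eqb l i then 1%nat else 0%nat)) (seq s n) = a i.
Proof.
  revert s; induction n; intros s H; [lia|].
  cbn [seq]. unfold Cprod in *; cbn [fold_right].
  destruct (Nat.eqb s i) eqn:E.
  - apply Nat.eqb_eq in E; subst. pose proof (mono_var_out a i (S i) n) as P. unfold Cprod in P.
    rewrite P by lia. simpl; ring.
  - apply Nat.eqb_neq in E. rewrite IHn by lia. simpl; ring.
Qed.

Lemma poly_var m i : (1 <= i <= m)%nat -> is_poly_fun m (fun a => a i).
Proof.
  intros Hi. exists ((Defs.C1, fun l => if Nat.eqb l i then 1%nat else 0%nat) :: nil); intros a.
  pose proof (mono_var_in a i 1 m) as P. unfold Cprod in P.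
  cbn [Csum fold_right fst snd]. unfold Cprod. rewrite P by lia. ring.
Qed.

Lemma poly_Csum {A} m (F : A -> (nat -> Cplx) -> Cplx) l :
  (forall x, In x l -> is_poly_fun m (F x)) -> is_poly_fun m (fun a => Csum (fun x => F x a) l).
Proof.
  induction l; intros H; simpl.
  - apply poly_const.
  - apply poly_add. apply H; simpl; auto. apply IHl; intros; apply H; simpl; auto.
Qed.

Lemma poly_scale m r f : is_poly_fun m f -> is_poly_fun m (fun a => Cscale r (f a)).
Proof. intros H. apply (poly_ext m (fun a => Cmul (RtoC r) (f a))). intros; rewrite Cscale_mul; auto.
  apply poly_mul; auto; apply poly_const. Qed.

Lemma pcoef_Ppoly_lt m a n : (n < m)%nat -> pcoef (Ppoly m a) n = a (m - n)%nat.
Proof.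
  intros H. unfold pcoef, Ppoly.
  rewrite nth_indep with (d' := a (m - 0)%nat) by (rewrite length_map, length_seq; auto).
  rewrite (map_nth (fun i => a (m - i)%nat) (seq 0 m) 0%nat n), seq_nth by auto. f_equal.
Qed.

Lemma pcoef_Ppoly_ge m a n : (m <= n)%nat -> pcoef (Ppoly m a) n = C0.
Proof.
  intros H. unfold pcoef, Ppoly. apply nth_overflow. rewrite length_map, length_seq; auto.
Qed.

Lemma poly_Pcoef m n : is_poly_fun m (fun a => pcoef (Ppoly m a) n).
Proof.
  destruct (Nat.lt_ge_cases n m) as [H|H].
  - destruct (Nat.eq_dec n 0).
    + apply (poly_ext m (fun a => a (m - n)%nat)). intros; rewrite pcoef_Ppoly_lt; auto.
      apply poly_var; lia.
    + apply (poly_ext m (fun a => a (m - n)%nat)). intros; rewrite pcoef_Ppoly_lt; auto.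
      apply poly_var; lia.
  - apply (poly_ext m (fun _ => C0)). intros; rewrite pcoef_Ppoly_ge; auto. apply poly_const.
Qed.

Lemma poly_ppow m k n : is_poly_fun m (fun a => pcoef (ppow (Ppoly m a) k) n).
Proof.
  revert n; induction k; intros n.
  - apply (poly_ext m (fun _ => pcoef (Defs.C1 :: nil) n)); [reflexivity| apply poly_const].
  - simpl ppow. apply (poly_ext m (fun a => Csum (fun i => Cmul (pcoef (Ppoly m a) i) (pcoef (ppow (Ppoly m a) k) (n - i))) (seq 0 (S n)))).
    intros; rewrite pcoef_pmul; auto.
    apply (poly_Csum m (fun i a => Cmul (pcoef (Ppoly m a) i) (pcoef (ppow (Ppoly m a) k) (n - i)))).
    intros; apply poly_mul; auto. apply poly_Pcoef.
Qed.

Lemma ppow_deg m a k n : ((m - 1) * k < n)%nat -> pcoef (ppow (Ppoly m a) k) n = C0.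
Proof.
  revert n; induction k; intros n Hn.
  - simpl. destruct n. lia. unfold pcoef; simpl. destruct n; reflexivity.
  - simpl ppow. rewrite pcoef_pmul. apply Csum_zero. intros i Hi.
    apply in_seq in Hi.
    destruct (Nat.lt_ge_cases i m).
    + rewrite IHk. ring. rewrite Nat.mul_succ_r in Hn. lia.
    + rewrite pcoef_Ppoly_ge; auto. ring.
Qed.

Lemma ppow_dep m a a' J k n :
  (forall i, (1 <= i <= J)%nat -> a i = a' i) ->
  ((m - 1) * k + 1 <= n + J)%nat ->
  pcoef (ppow (Ppoly m a) k) n = pcoef (ppow (Ppoly m a') k) n.
Proof.
  intros Ha. revert n; induction k; intros n Hn.
  - reflexivity.
  - simpl ppow. rewrite !pcoef_pmul. apply Csum_ext. intros i Hi.
    apply in_seq in Hi. rewrite Nat.mul_succ_r in Hn.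
    destruct (Nat.lt_ge_cases i m).
    + destruct (Nat.le_gt_cases (m - i) J).
      * rewrite !pcoef_Ppoly_lt by auto. rewrite Ha by lia. rewrite IHk by lia. reflexivity.
      * rewrite (ppow_deg m a k), (ppow_deg m a' k) by lia. ring.
    + rewrite !pcoef_Ppoly_ge by auto. ring.
Qed.

Lemma pmul_one p n : pcoef (pmul p (Defs.C1 :: nil)) n = pcoef p n.
Proof.
  revert n; induction p; intros n.
  - reflexivity.
  - destruct n; unfold pcoef in *; simpl. ring. apply IHp.
Qed.

Lemma dom_bound (f g G : R -> R) x y (pr : Riemann_integrable f x y) :
  x <= y ->
  (forall t, x <= t <= y -> continuity_pt f t) ->
  (forall t, x <= t <= y -> derivable_pt_lim G t (g t)) ->
  (forall t, x <= t <= y -> Rabs (f t) <= g t) ->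
  Rabs (RiemannInt pr) <= G y - G x.
Proof.
  intros Hxy Hc HG Hb.
  assert (Ca : forall t, x <= t <= y -> continuity_pt (fun t => Rabs (f t)) t).
  { intros t Ht. apply (continuity_pt_comp f Rabs). apply Hc; auto. apply Rcontinuity_abs. }
  pose (pra := RiemannInt_P16 pr).
  apply Rle_trans with (RiemannInt pra). apply RiemannInt_P17; auto.
  rewrite (RiemannInt_P20 Hxy (FTC_P1 Hxy Ca) pra).
  set (P := primitive Hxy (FTC_P1 Hxy Ca)).
  destruct Hxy as [Hlt|Heq].
  - assert (D : forall c, x <= c <= y -> derivable_pt_lim (fun t => G t - P t) c (g c - Rabs (f c))).
    { intros c Hc'. apply derivable_pt_lim_minus. apply HG; auto.
      apply (RiemannInt_P28 (f := fun t => Rabs (f t))); auto. }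
    destruct (MVT_cor2 (fun t => G t - P t) (fun c => g c - Rabs (f c)) x y Hlt D) as [c [Hc1 Hc2]].
    assert (0 <= (g c - Rabs (f c)) * (y - x)).
    { apply Rmult_le_pos. specialize (Hb c ltac:(lra)). lra. lra. }
    lra.
  - subst. lra.
Qed.

Lemma small_inv (e : R) : 0 < e -> exists N : nat, / (INR N + 1) < e.
Proof.
  intros He. destruct (archimed (/ e)) as [H1 _].
  assert (0 <= up (/ e))%Z.
  { apply le_IZR. assert (0 < / e) by (apply Rinv_0_lt_compat; auto). lra. }
  exists (Z.to_nat (up (/ e))). rewrite INR_IZR_INZ, Z2Nat.id by auto.
  assert (0 < / e) by (apply Rinv_0_lt_compat; auto).
  rewrite <- (Rinv_inv e) at 2. apply Rinv_lt_contravar. nra. lra.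
Qed.

Lemma lim0 (F : R -> R) C : 0 <= C ->
  (forall x x', 0 < x -> x <= x' -> x' <= 1 -> Rabs (F x - F x') <= C * sqrt x') ->
  exists L, forall eps, 0 < eps -> exists d, 0 < d /\ forall x, 0 < x -> x < d -> Rabs (F x - L) < eps.
Proof.
  intros HC HF.
  set (xs := fun n : nat => / (INR n + 1)).
  assert (Hxs : forall n, 0 < xs n <= 1).
  { intros n; unfold xs; pose proof (pos_INR n). split. apply Rinv_0_lt_compat; lra.
    rewrite <- Rinv_1. apply Rinv_le_contravar; lra. }
  assert (Hmono : forall n p, (n <= p)%nat -> xs p <= xs n).
  { intros n p Hnp; unfold xs. apply Rinv_le_contravar. pose proof (pos_INR n); lra.
    apply le_INR in Hnp; lra. }
  assert (KEY : forall eps, 0 < eps -> exists N, C * sqrt (xs N) < eps).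
  { intros eps He. destruct (small_inv ((eps / (C + 1)) ^ 2)) as [N HN].
    apply pow_lt. apply Rdiv_lt_0_compat; lra.
    exists N. assert (sqrt (xs N) < eps / (C + 1)).
    { rewrite <- (sqrt_pow2 (eps / (C+1))). apply sqrt_lt_1_alt. split. left; apply Hxs. exact HN.
      left; apply Rdiv_lt_0_compat; lra. }
    assert (0 <= sqrt (xs N)) by apply sqrt_pos.
    apply Rle_lt_trans with ((C + 1) * sqrt (xs N)). nra.
    apply (Rmult_lt_compat_l (C+1)) in H. 2: lra.
    replace ((C + 1) * (eps / (C + 1))) with eps in H by (field; lra). lra. }
  assert (Bnd : forall x x' N, 0 < x -> x <= xs N -> 0 < x' -> x' <= xs N -> Rabs (F x - F x') <= C * sqrt (xs N)).
  { intros x x' N Hx HxN Hx' Hx'N. pose proof (Hxs N).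
    destruct (Rle_dec x x').
    - apply Rle_trans with (C * sqrt x'). apply HF; lra.
      apply Rmult_le_compat_l; auto. apply sqrt_le_1_alt; auto.
    - rewrite Rabs_minus_sym. apply Rle_trans with (C * sqrt x). apply HF; lra.
      apply Rmult_le_compat_l; auto. apply sqrt_le_1_alt; auto. }
  assert (Cau : Cauchy_crit (fun n => F (xs n))).
  { intros eps He. destruct (KEY eps He) as [N HN]. exists N. intros n p Hn Hp.
    unfold Rdist. eapply Rle_lt_trans. 2: exact HN. apply Bnd; try apply Hxs; apply Hmono; lia. }
  destruct (R_complete _ Cau) as [L HL].
  exists L. intros eps He.
  destruct (KEY (eps / 2)) as [N HN]. lra.
  destruct (HL (eps / 2)) as [N2 HN2]. lra.
  exists (xs N). split. apply Hxs. intros x Hx HxN.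
  set (n := max N N2).
  specialize (HN2 n ltac:(lia)). unfold Rdist in HN2.
  assert (Rabs (F x - F (xs n)) <= C * sqrt (xs N)).
  { apply Bnd; try lra; try apply Hxs. apply Hmono; lia. }
  replace (F x - L) with ((F x - F (xs n)) + (F (xs n) - L)) by ring.
  eapply Rle_lt_trans. apply Rabs_triang. lra.
Qed.

Definition ri (f : R -> R) (Hc : forall t, 0 < t -> continuity_pt f t) x y (hx : 0 < x) (hy : 0 < y) :
  Riemann_integrable f x y.
Proof.
  destruct (Rle_dec x y) as [h|h].
  - apply continuity_implies_RiemannInt; auto. intros t Ht; apply Hc; lra.
  - apply RiemannInt_P1. apply continuity_implies_RiemannInt; auto. lra. intros t Ht; apply Hc; lra.
Defined.

Definition RI f Hc x y : R :=
  match Rlt_dec 0 x, Rlt_dec 0 y with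
  | left hx, left hy => RiemannInt (ri f Hc x y hx hy)
  | _, _ => 0 end.

Lemma RI_spec f Hc x y (pr : Riemann_integrable f x y) : 0 < x -> 0 < y -> RiemannInt pr = RI f Hc x y.
Proof.
  intros hx hy. unfold RI. destruct (Rlt_dec 0 x); [|lra]. destruct (Rlt_dec 0 y); [|lra].
  apply RiemannInt_P5.
Qed.

Lemma RI_chasles f Hc x y z : 0 < x -> 0 < y -> 0 < z -> RI f Hc x y + RI f Hc y z = RI f Hc x z.
Proof.
  intros hx hy hz. rewrite <- (RI_spec f Hc x y (ri f Hc x y hx hy)), <- (RI_spec f Hc y z (ri f Hc y z hy hz)),
    <- (RI_spec f Hc x z (ri f Hc x z hx hz)) by auto.
  apply RiemannInt_P26.
Qed.

Lemma deriv_sqrt2 A t : 0 < t -> derivable_pt_lim (fun t => 2 * A * sqrt t) t (A / sqrt t).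
Proof.
  intros Ht. pose proof (sqrt_lt_R0 t Ht).
  replace (A / sqrt t) with (2 * A * / (2 * sqrt t)) by (field; lra).
  apply (derivable_pt_lim_scal sqrt (2 * A)). apply derivable_pt_lim_sqrt; auto.
Qed.

Lemma deriv_isqrt B t : 0 < t -> derivable_pt_lim (fun t => - (2 * B) / sqrt t) t (B / (t * sqrt t)).
Proof.
  intros Ht. pose proof (sqrt_lt_R0 t Ht). pose proof (sqrt_sqrt t (Rlt_le _ _ Ht)).
  assert (E : B / (t * sqrt t) = (0 * sqrt t - / (2 * sqrt t) * (- (2 * B))) / Rsqr (sqrt t)).
  { unfold Rsqr. rewrite H0. field. lra. }
  rewrite E.
  apply (derivable_pt_lim_div (fun _ => - (2 * B)) sqrt).
  apply derivable_pt_lim_const. apply derivable_pt_lim_sqrt; auto. lra.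
Qed.

Lemma int_exists f A B (Hc : forall t, 0 < t -> continuity_pt f t) :
  (forall t, 0 < t -> t <= 1 -> Rabs (f t) <= A / sqrt t) ->
  (forall t, 1 <= t -> Rabs (f t) <= B / (t * sqrt t)) ->
  exists l, is_int_0_inf f l.
Proof.
  intros H0 H1.
  assert (HA : 0 <= A). { specialize (H0 1 ltac:(lra) ltac:(lra)). rewrite sqrt_1 in H0.
    pose proof (Rabs_pos (f 1)). lra. }
  assert (HB : 0 <= B). { specialize (H1 1 ltac:(lra)). rewrite sqrt_1 in H1.
    pose proof (Rabs_pos (f 1)). lra. }
  assert (Near : forall x x', 0 < x -> x <= x' -> x' <= 1 -> Rabs (RI f Hc x 1 - RI f Hc x' 1) <= 2 * A * sqrt x').
  { intros x x' hx hxx' hx1.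
    replace (RI f Hc x 1 - RI f Hc x' 1) with (RI f Hc x x').
    2:{ rewrite <- (RI_chasles f Hc x x' 1) by lra. ring. }
    rewrite <- (RI_spec f Hc x x' (ri f Hc x x' hx ltac:(lra))) by lra.
    eapply Rle_trans.
    apply (dom_bound f (fun t => A / sqrt t) (fun t => 2 * A * sqrt t)); auto.
    intros; apply Hc; lra. intros; apply deriv_sqrt2; lra. intros; apply H0; lra.
    pose proof (sqrt_pos x). nra. }
  assert (Far : forall x x', 0 < x -> x <= x' -> x' <= 1 -> Rabs (RI f Hc 1 (/ x) - RI f Hc 1 (/ x')) <= 2 * B * sqrt x').
  { intros x x' hx hxx' hx1.
    assert (Hy : 1 <= / x'). { rewrite <- Rinv_1. apply Rinv_le_contravar; lra. }
    assert (Hyy : / x' <= / x). { apply Rinv_le_contravar; lra. }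
    replace (RI f Hc 1 (/ x) - RI f Hc 1 (/ x')) with (RI f Hc (/ x') (/ x)).
    2:{ rewrite <- (RI_chasles f Hc 1 (/ x') (/ x)) by lra. ring. }
    rewrite <- (RI_spec f Hc (/ x') (/ x) (ri f Hc (/x') (/x) ltac:(lra) ltac:(lra))) by lra.
    eapply Rle_trans.
    apply (dom_bound f (fun t => B / (t * sqrt t)) (fun t => - (2 * B) / sqrt t)); auto.
    intros; apply Hc; lra. intros; apply deriv_isqrt; lra. intros; apply H1; lra.
    pose proof (sqrt_lt_R0 (/ x) ltac:(lra)). pose proof (sqrt_lt_R0 (/ x') ltac:(lra)).
    assert (0 <= 2 * B / sqrt (/ x)) by (unfold Rdiv; apply Rmult_le_pos; [lra | left; apply Rinv_0_lt_compat; lra]).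
    replace (2 * B * sqrt x') with (2 * B / sqrt (/ x')).
    unfold Rdiv in *. lra.
    rewrite sqrt_inv. field. pose proof (sqrt_lt_R0 x' ltac:(lra)); lra. }
  destruct (lim0 (fun x => RI f Hc x 1) (2 * A) ltac:(lra) Near) as [L1 HL1].
  destruct (lim0 (fun x => RI f Hc 1 (/ x)) (2 * B) ltac:(lra) Far) as [L2 HL2].
  exists (L1 + L2). unfold is_int_0_inf. split.
  - intros x y hx hxy. constructor. exact (ri f Hc x y hx ltac:(lra)).
  - intros eps He. destruct (HL1 (eps / 2) ltac:(lra)) as [d1 [Hd1 P1]].
    destruct (HL2 (eps / 2) ltac:(lra)) as [d2 [Hd2 P2]].
    exists (Rmin d1 1). split. apply Rmin_pos; lra.
    exists (Rmax 1 (/ d2)). split. apply Rlt_le_trans with 1. lra. apply Rmax_l.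
    intros x y pr hx hxd hyM.
    assert (hy1 : 1 < y) by (eapply Rle_lt_trans; [apply Rmax_l | exact hyM]).
    assert (hyd : / d2 < y) by (eapply Rle_lt_trans; [apply Rmax_r | exact hyM]).
    rewrite (RI_spec f Hc x y pr) by lra.
    rewrite <- (RI_chasles f Hc x 1 y) by lra.
    specialize (P1 x hx ltac:(pose proof (Rmin_l d1 1); lra)).
    assert (0 < / y) by (apply Rinv_0_lt_compat; lra).
    specialize (P2 (/ y) H ltac:(rewrite <- (Rinv_inv d2); apply Rinv_lt_contravar; [apply Rmult_lt_0_compat; [apply Rinv_0_lt_compat|]; lra | lra])).
    rewrite Rinv_inv in P2.
    replace (RI f Hc x 1 + RI f Hc 1 y - (L1 + L2)) with ((RI f Hc x 1 - L1) + (RI f Hc 1 y - L2)) by ring.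
    eapply Rle_lt_trans. apply Rabs_triang. lra.
Qed.

Lemma is_int_unique f l1 l2 : is_int_0_inf f l1 -> is_int_0_inf f l2 -> l1 = l2.
Proof.
  unfold is_int_0_inf; intros [I1 H1] [_ H2].
  destruct (Req_dec l1 l2) as [|Hne]; auto. exfalso.
  set (e := Rabs (l1 - l2) / 2).
  assert (He : 0 < e). { unfold e. assert (0 < Rabs (l1 - l2)) by (apply Rabs_pos_lt; lra). lra. }
  destruct (H1 e He) as [d1 [Hd1 [M1 [HM1 P1]]]].
  destruct (H2 e He) as [d2 [Hd2 [M2 [HM2 P2]]]].
  set (x := Rmin d1 d2 / 2). set (y := Rmax (Rmax M1 M2) x + 1).
  assert (hx : 0 < x) by (unfold x; pose proof (Rmin_pos d1 d2 Hd1 Hd2); lra).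
  assert (hx1 : x < d1) by (unfold x; pose proof (Rmin_l d1 d2); pose proof (Rmin_pos d1 d2 Hd1 Hd2); lra).
  assert (hx2 : x < d2) by (unfold x; pose proof (Rmin_r d1 d2); pose proof (Rmin_pos d1 d2 Hd1 Hd2); lra).
  pose proof (Rmax_l (Rmax M1 M2) x). pose proof (Rmax_r (Rmax M1 M2) x).
  assert (hy1 : M1 < y) by (unfold y; pose proof (Rmax_l M1 M2); lra).
  assert (hy2 : M2 < y) by (unfold y; pose proof (Rmax_r M1 M2); lra).
  assert (hxy : x <= y) by (unfold y; lra).
  destruct (I1 x y hx hxy) as [pr].
  specialize (P1 x y pr hx hx1 hy1). specialize (P2 x y pr hx hx2 hy2).
  assert (Rabs (l1 - l2) < 2 * e).
  { replace (l1 - l2) with (-(RiemannInt pr - l1) + (RiemannInt pr - l2)) by ring.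
    eapply Rle_lt_trans. apply Rabs_triang. rewrite Rabs_Ropp. lra. }
  unfold e in H3. lra.
Qed.

Lemma Int0inf_eq f l : is_int_0_inf f l -> Int0inf f = l.
Proof.
  intros H. unfold Int0inf. apply (is_int_unique f). 2: exact H.
  apply (epsilon_spec (inhabits 0) (is_int_0_inf f)). exists l; auto.
Qed.

Lemma is_int_zero : is_int_0_inf (fun _ => 0) 0.
Proof.
  unfold is_int_0_inf; split.
  - intros x y _ hxy. constructor. apply (RiemannInt_P14 x y 0).
  - intros eps He. exists 1. split. lra. exists 1. split. lra.
    intros x y pr _ _ _.
    assert (E : RiemannInt pr = 0).
    { pose proof (RiemannInt_P15 (RiemannInt_P14 x y 0)) as E. rewrite Rmult_0_l in E.
      rewrite <- E. apply (RiemannInt_P5 (f := fun _ => 0)). }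
    rewrite E, Rminus_0_r, Rabs_R0; auto.
Qed.

Lemma is_int_lin f g h c l1 l2 : is_int_0_inf f l1 -> is_int_0_inf g l2 ->
  (forall t, 0 < t -> h t = f t * c + g t) -> is_int_0_inf h (l1 * c + l2).
Proof.
  unfold is_int_0_inf; intros [If Hf] [Ig Hg] Hh.
  assert (Ih : forall x y, 0 < x -> x <= y -> Riemann_integrable f x y -> Riemann_integrable g x y ->
     Riemann_integrable h x y).
  { intros x y hx hxy pf pg. refine (@Riemann_integrable_ext (fun t => g t + c * f t) h x y _ _).
    intros t Ht. rewrite Hh. ring. unfold Rmin in Ht; destruct (Rle_dec x y); lra.
    apply RiemannInt_P10; auto. }
  unfold is_int_0_inf; split.
  - intros x y hx hxy. destruct (If x y hx hxy) as [pf]. destruct (Ig x y hx hxy) as [pg].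
    constructor. apply Ih; auto.
  - intros eps He. set (e' := eps / (2 * (Rabs c + 1))).
    assert (He' : 0 < e'). { unfold e'. pose proof (Rabs_pos c). apply Rdiv_lt_0_compat; lra. }
    destruct (Hf e' He') as [d1 [Hd1 [M1 [HM1 P1]]]].
    destruct (Hg (eps / 2) ltac:(lra)) as [d2 [Hd2 [M2 [HM2 P2]]]].
    exists (Rmin 1 (Rmin d1 d2)). split. repeat apply Rmin_pos; lra.
    exists (Rmax 1 (Rmax M1 M2)). split. eapply Rlt_le_trans; [|apply Rmax_l]; lra.
    intros x y pr hx hxd hyM.
    pose proof (Rmin_l 1 (Rmin d1 d2)). pose proof (Rmin_r 1 (Rmin d1 d2)).
    pose proof (Rmin_l d1 d2). pose proof (Rmin_r d1 d2).
    pose proof (Rmax_l 1 (Rmax M1 M2)). pose proof (Rmax_r 1 (Rmax M1 M2)).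
    pose proof (Rmax_l M1 M2). pose proof (Rmax_r M1 M2).
    assert (hxy : x <= y) by lra.
    destruct (If x y hx hxy) as [pf]. destruct (Ig x y hx hxy) as [pg].
    specialize (P1 x y pf hx ltac:(lra) ltac:(lra)). specialize (P2 x y pg hx ltac:(lra) ltac:(lra)).
    pose (p3 := RiemannInt_P10 c pg pf).
    assert (E : RiemannInt pr = RiemannInt p3).
    { apply RiemannInt_P18; auto. intros t Ht. rewrite Hh by lra. ring. }
    rewrite E, (RiemannInt_P13 pg pf p3).
    replace (RiemannInt pg + c * RiemannInt pf - (l1 * c + l2)) with
      (c * (RiemannInt pf - l1) + (RiemannInt pg - l2)) by ring.
    eapply Rle_lt_trans. apply Rabs_triang. rewrite Rabs_mult.
    assert (Rabs c * Rabs (RiemannInt pf - l1) <= Rabs c * e').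
    { apply Rmult_le_compat_l. apply Rabs_pos. lra. }
    assert (Rabs c * e' < eps / 2).
    { unfold e'. pose proof (Rabs_pos c). apply Rmult_lt_reg_r with (2 * (Rabs c + 1)). lra.
      field_simplify; lra. }
    lra.
Qed.

Lemma RI_le_const f Hc a b u : 0 < a -> a <= b -> (forall t, a < t < b -> f t <= u) -> RI f Hc a b <= u * (b - a).
Proof.
  intros ha hab Hu. rewrite <- (RI_spec f Hc a b (ri f Hc a b ha ltac:(lra))) by lra.
  rewrite <- (RiemannInt_P15 (RiemannInt_P14 a b u)).
  apply RiemannInt_P19; auto.
Qed.

Lemma is_int_neg f l (Hc : forall t, 0 < t -> continuity_pt f t) :
  is_int_0_inf f l -> (forall t, 0 < t -> f t < 0) -> l < 0.
Proof.
  intros [I H] Hneg.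
  assert (hv : f 1 < 0) by (apply Hneg; lra). remember (f 1) as v eqn:Hv.
  destruct (Hc 1 ltac:(lra) (- v / 2) ltac:(lra)) as [al [Hal Hcont]].
  assert (Near : forall t, Rabs (t - 1) < al -> f t <= v / 2).
  { intros t Ht. destruct (Req_dec t 1) as [->|Hne]. lra.
    specialize (Hcont t). simpl in Hcont. unfold R_dist in Hcont.
    assert (Rabs (f t - f 1) < - v / 2). { apply Hcont. unfold D_x, no_cond. repeat split; auto. }
    apply Rabs_def2 in H0. lra. }
  set (be := Rmin (al / 2) 1).
  assert (hbe : 0 < be) by (apply Rmin_pos; lra).
  assert (hbe1 : be <= al / 2) by apply Rmin_l.
  destruct (H (- v * be / 4)) as [d [Hd [M [HM P]]]].
  { apply Rmult_lt_0_compat. nra. lra. }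
  set (x := Rmin d 1 / 2). set (y := Rmax M (1 + be) + 1).
  assert (hx : 0 < x) by (unfold x; pose proof (Rmin_pos d 1 Hd ltac:(lra)); lra).
  assert (hxd : x < d) by (unfold x; pose proof (Rmin_l d 1); pose proof (Rmin_pos d 1 Hd ltac:(lra)); lra).
  assert (hx1 : x < 1) by (unfold x; pose proof (Rmin_r d 1); lra).
  pose proof (Rmax_l M (1 + be)). pose proof (Rmax_r M (1 + be)).
  assert (hyM : M < y) by (unfold y; lra).
  assert (hyb : 1 + be < y) by (unfold y; lra).
  destruct (I x y hx ltac:(lra)) as [pr].
  specialize (P x y pr hx hxd hyM).
  rewrite (RI_spec f Hc x y pr) in P by lra.
  rewrite <- (RI_chasles f Hc x (1 + be) y), <- (RI_chasles f Hc x 1 (1 + be)) in P by lra.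
  assert (A1 : RI f Hc x 1 <= 0 * (1 - x)).
  { apply RI_le_const; try lra. intros t Ht; left; apply Hneg; lra. }
  assert (A2 : RI f Hc 1 (1 + be) <= v / 2 * (1 + be - 1)).
  { apply RI_le_const; try lra. intros t Ht; apply Near. rewrite Rabs_right; lra. }
  assert (A3 : RI f Hc (1 + be) y <= 0 * (y - (1 + be))).
  { apply RI_le_const; try lra. intros t Ht; left; apply Hneg; lra. }
  apply Rabs_def2 in P. nra.
Qed.

Lemma is_int_pos f l (Hc : forall t, 0 < t -> continuity_pt f t) :
  is_int_0_inf f l -> (forall t, 0 < t -> 0 < f t) -> 0 < l.
Proof.
  intros Hi Hpos.
  assert (Hn : is_int_0_inf (fun t => - f t) (l * (-1) + 0)).
  { apply (is_int_lin f (fun _ => 0)); auto. apply is_int_zero. intros; ring. }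
  assert (l * (-1) + 0 < 0).
  { apply (is_int_neg (fun t => - f t)); auto.
    intros t ht. apply continuity_pt_opp. auto. intros t ht; specialize (Hpos t ht); lra. }
  lra.
Qed.

Lemma div_nonneg a b : 0 <= a -> 0 < b -> 0 <= a / b.
Proof. intros; unfold Rdiv; apply Rmult_le_pos; auto; left; apply Rinv_0_lt_compat; auto. Qed.

Lemma div_le1 a b : 0 < b -> a <= b -> a / b <= 1.
Proof. intros Hb Hab. apply Rmult_le_reg_r with b; auto. unfold Rdiv; rewrite Rmult_assoc, Rinv_l; lra. Qed.

Lemma pow_le1_mono x a b : 0 <= x <= 1 -> (a <= b)%nat -> x ^ b <= x ^ a.
Proof.
  intros Hx Hab. replace b with (a + (b - a))%nat by lia. rewrite pow_add.
  pose proof (pow_le x a (proj1 Hx)).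
  assert (x ^ (b - a) <= 1). { rewrite <- (pow1 (b - a)). apply pow_incr. lra. }
  nra.
Qed.

Lemma bern r k : 0 <= r <= 1 -> 1 - r ^ k <= INR k * (1 - r).
Proof.
  intros Hr. induction k.
  - simpl; lra.
  - rewrite S_INR. simpl. assert (r ^ k <= 1) by (rewrite <- (pow1 k); apply pow_incr; lra).
    pose proof (pow_le r k (proj1 Hr)). nra.
Qed.

Lemma I1 s k : 0 <= s -> (1 <= k)%nat ->
  s ^ k * sqrt (s + 1) / (s + 1) ^ k <= sqrt s.
Proof.
  intros Hs Hk.
  set (w := s + 1). set (u := sqrt w). set (q := sqrt s).
  assert (Hw : 0 < w) by (unfold w; lra).
  assert (Hu : 0 < u) by (apply sqrt_lt_R0; auto).
  assert (Hq : 0 <= q) by apply sqrt_pos.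
  assert (Hqq : q * q = s) by (apply sqrt_sqrt; auto).
  assert (Huu : u * u = w) by (apply sqrt_sqrt; lra).
  assert (Hr : 0 <= s / w <= 1). { split. apply div_nonneg; lra. apply div_le1; unfold w; lra. }
  replace (s ^ k * u / w ^ k) with ((s / w) ^ k * u).
  2:{ unfold Rdiv. rewrite Rpow_mult_distr, pow_inv. ring. }
  apply Rle_trans with ((s / w) * u).
  - apply Rmult_le_compat_r. lra. rewrite <- (pow_1 (s / w)) at 2. apply pow_le1_mono; auto.
  - assert (q <= u). { apply sqrt_le_1_alt. unfold w; lra. }
    apply Rmult_le_reg_r with w. lra. replace (s / w * u * w) with (s * u) by (field; lra).
    rewrite <- Hqq, <- Huu. assert (0 <= q * u * (u - q)) by (apply Rmult_le_pos; [apply Rmult_le_pos|]; lra). nra.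
Qed.

Lemma I2 s k : 0 <= s -> sqrt s - s ^ k * sqrt (s + 1) / (s + 1) ^ k <= INR k / sqrt (s + 1).
Proof.
  intros Hs.
  set (w := s + 1). set (u := sqrt w). set (q := sqrt s).
  assert (Hw : 0 < w) by (unfold w; lra).
  assert (Hu : 0 < u) by (apply sqrt_lt_R0; auto).
  assert (Huu : u * u = w) by (apply sqrt_sqrt; lra).
  assert (Hr : 0 <= s / w <= 1). { split. apply div_nonneg; lra. apply div_le1; unfold w; lra. }
  assert (q <= u). { apply sqrt_le_1_alt. unfold w; lra. }
  replace (s ^ k * u / w ^ k) with ((s / w) ^ k * u).
  2:{ unfold Rdiv. rewrite Rpow_mult_distr, pow_inv. ring. }
  pose proof (bern (s / w) k Hr).
  assert (E : 1 - s / w = / w). { unfold w; field. lra. }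
  rewrite E in H0.
  apply Rle_trans with ((1 - (s / w) ^ k) * u). nra.
  apply Rle_trans with (INR k * / w * u). apply Rmult_le_compat_r; lra.
  rewrite <- Huu. right. field. lra.
Qed.

Lemma I3 s : 0 < s -> s * sqrt (s + 1) / (s + 1) < sqrt s.
Proof.
  intros Hs.
  set (w := s + 1). set (u := sqrt w). set (q := sqrt s).
  assert (Hw : 0 < w) by (unfold w; lra).
  assert (Hu : 0 < u) by (apply sqrt_lt_R0; auto).
  assert (Hq : 0 < q) by (apply sqrt_lt_R0; auto).
  assert (Hqq : q * q = s) by (apply sqrt_sqrt; lra).
  assert (Huu : u * u = w) by (apply sqrt_sqrt; lra).
  assert (q < u). { apply sqrt_lt_1_alt. unfold w; lra. }
  apply Rmult_lt_reg_r with w. lra. replace (s * u / w * w) with (s * u) by (field; lra).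
  rewrite <- Hqq, <- Huu. assert (0 < q * u * (u - q)) by (apply Rmult_lt_0_compat; [apply Rmult_lt_0_compat|]; lra). nra.
Qed.

Lemma Rpower_neg_half w k : 0 < w -> Rpower w (- (INR k - 1 / 2)) = sqrt w / w ^ k.
Proof.
  intros Hw. replace (- (INR k - 1 / 2)) with (/ 2 + - INR k) by field.
  rewrite Rpower_plus, Rpower_sqrt, Rpower_Ropp, Rpower_pow by auto. reflexivity.
Qed.

Lemma Rpower_half_m t m j : 0 < t -> Rpower t (INR m / 2 - INR j) = sqrt t ^ m / t ^ j.
Proof.
  intros Ht. replace (INR m / 2 - INR j) with (/ 2 * INR m + - INR j) by field.
  rewrite Rpower_plus, Rpower_Ropp, Rpower_pow by auto.
  rewrite <- Rpower_mult, Rpower_sqrt, Rpower_pow by (auto; apply sqrt_lt_R0; auto). reflexivity.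
Qed.

Lemma sqrt_pow_comm t n : 0 <= t -> sqrt t ^ n = sqrt (t ^ n).
Proof.
  intros Ht. induction n. simpl. rewrite sqrt_1; auto.
  simpl. rewrite IHn, sqrt_mult_alt; auto.
Qed.

Definition phi m j k t := t ^ (m * k - j) * Rpower (t ^ m + 1) (- (INR k - 1 / 2)).
Definition psiS m j k t := phi m j k t - Rpower t (INR m / 2 - INR j).

Lemma cont_Rpower g c t : continuity_pt g t -> 0 < g t -> continuity_pt (fun s => Rpower (g s) c) t.
Proof.
  intros Hg Hpos. unfold Rpower.
  apply (continuity_pt_comp (fun s => c * ln (g s)) exp).
  - apply (continuity_pt_mult (fun _ => c) (fun s => ln (g s))).
    apply continuity_pt_const; intros ? ?; reflexivity.
    apply (continuity_pt_comp g ln); auto.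
    apply derivable_continuous_pt. exists (/ g t). apply derivable_pt_lim_ln; auto.
  - apply derivable_continuous_pt, derivable_pt_exp.
Qed.

Lemma cont_pow n t : continuity_pt (fun s => s ^ n) t.
Proof. apply derivable_continuous_pt, derivable_pt_pow. Qed.

Lemma cont_phi m j k t : 0 < t -> continuity_pt (phi m j k) t.
Proof.
  intros Ht. unfold phi.
  apply (continuity_pt_mult (fun s => s ^ (m * k - j)) (fun s => Rpower (s ^ m + 1) (- (INR k - 1 / 2)))).
  apply cont_pow.
  apply (cont_Rpower (fun s => s ^ m + 1)).
  apply (continuity_pt_plus (fun s => s ^ m) (fun _ => 1)). apply cont_pow.
  apply continuity_pt_const; intros ? ?; reflexivity.
  pose proof (pow_lt t m Ht). lra.
Qed.

Lemma cont_psiS m j k t : 0 < t -> continuity_pt (psiS m j k) t.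
Proof.
  intros Ht. unfold psiS.
  apply (continuity_pt_minus (phi m j k) (fun s => Rpower s (INR m / 2 - INR j))).
  apply cont_phi; auto.
  apply (cont_Rpower (fun s => s)); auto. apply derivable_continuous_pt, derivable_pt_id.
Qed.

Lemma phi_form m j k t : 0 < t -> (j <= m * k)%nat ->
  phi m j k t = (t ^ m) ^ k * sqrt (t ^ m + 1) / (t ^ m + 1) ^ k / t ^ j.
Proof.
  intros Ht Hjk. unfold phi. rewrite Rpower_neg_half by (pose proof (pow_lt t m Ht); lra).
  rewrite <- pow_mult.
  replace (t ^ (m * k)) with (t ^ (m * k - j) * t ^ j) by (rewrite <- pow_add; f_equal; lia).
  pose proof (pow_lt t j Ht). pose proof (pow_lt (t ^ m + 1) k ltac:(pose proof (pow_lt t m Ht); lra)).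
  field. lra.
Qed.

Lemma R_form m j t : 0 < t -> Rpower t (INR m / 2 - INR j) = sqrt (t ^ m) / t ^ j.
Proof. intros Ht. rewrite Rpower_half_m, sqrt_pow_comm by lra. reflexivity. Qed.

Lemma sqrt_t_facts t : 0 < t -> 0 < sqrt t /\ sqrt t * sqrt t = t.
Proof. intros Ht; split. apply sqrt_lt_R0; auto. apply sqrt_sqrt; lra. Qed.

Lemma psiS_bounds m j k : (3 <= m)%nat -> (1 <= j)%nat -> (2 * j <= m + 1)%nat -> (1 <= k)%nat ->
  (forall t, 0 < t -> t <= 1 -> Rabs (psiS m j k t) <= 1 / sqrt t) /\
  (forall t, 1 <= t -> Rabs (psiS m j k t) <= INR k / (t * sqrt t)).
Proof.
  intros Hm Hj H2j Hk.
  assert (Hjk : (j <= m * k)%nat) by nia.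
  assert (Gen : forall t, 0 < t -> Rabs (psiS m j k t) =
     (sqrt (t ^ m) - (t ^ m) ^ k * sqrt (t ^ m + 1) / (t ^ m + 1) ^ k) / t ^ j /\
     0 <= sqrt (t ^ m) - (t ^ m) ^ k * sqrt (t ^ m + 1) / (t ^ m + 1) ^ k).
  { intros t Ht. pose proof (pow_lt t m Ht). pose proof (pow_lt t j Ht).
    pose proof (I1 (t ^ m) k ltac:(lra) Hk).
    split; [|lra].
    unfold psiS. rewrite phi_form, R_form by auto.
    pose proof (pow_lt (t ^ m + 1) k ltac:(lra)).
    rewrite Rabs_left1. field; repeat split; apply Rgt_not_eq; lra.
    set (X := (t ^ m) ^ k * sqrt (t ^ m + 1) / (t ^ m + 1) ^ k) in *.
    assert (0 < / t ^ j) by (apply Rinv_0_lt_compat; lra). unfold Rdiv. nra. }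
  split.
  - intros t Ht Ht1. destruct (Gen t Ht) as [E Hn]. rewrite E.
    destruct (sqrt_t_facts t Ht) as [Hp Hpp]. set (p := sqrt t) in *.
    assert (Hp1 : p <= 1). { unfold p; rewrite <- sqrt_1; apply sqrt_le_1_alt; lra. }
    pose proof (pow_lt t m Ht). pose proof (pow_lt t j Ht).
    assert (0 <= (t ^ m) ^ k * sqrt (t ^ m + 1) / (t ^ m + 1) ^ k).
    { apply div_nonneg. apply Rmult_le_pos. apply pow_le; lra. apply sqrt_pos. apply pow_lt; lra. }
    apply Rle_trans with (sqrt (t ^ m) / t ^ j).
    { unfold Rdiv. apply Rmult_le_compat_r. left; apply Rinv_0_lt_compat; lra. lra. }
    rewrite <- sqrt_pow_comm by lra. fold p.
    assert (Et : t ^ j = p ^ (2 * j)). { rewrite pow_mult. simpl. rewrite Rmult_1_r, Hpp. reflexivity. }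
    rewrite Et. pose proof (pow_lt p (2 * j) Hp).
    apply Rmult_le_reg_r with (p ^ (2 * j) * p). nra.
    replace (p ^ m / p ^ (2 * j) * (p ^ (2 * j) * p)) with (p ^ (m + 1)) by (rewrite pow_add; field; lra).
    replace (1 / p * (p ^ (2 * j) * p)) with (p ^ (2 * j)) by (field; lra).
    apply pow_le1_mono; [lra | lia].
  - intros t Ht1. assert (Ht : 0 < t) by lra. destruct (Gen t Ht) as [E Hn]. rewrite E.
    destruct (sqrt_t_facts t Ht) as [Hp Hpp]. set (p := sqrt t) in *.
    assert (Hp1 : 1 <= p). { unfold p; rewrite <- sqrt_1; apply sqrt_le_1_alt; lra. }
    pose proof (pow_lt t m Ht). pose proof (pow_lt t j Ht).
    pose proof (I2 (t ^ m) k ltac:(lra)).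
    assert (Hw : 0 < sqrt (t ^ m + 1)) by (apply sqrt_lt_R0; lra).
    assert (Hwp : p <= sqrt (t ^ m + 1)).
    { apply Rle_trans with (sqrt (t ^ m)).
      rewrite <- sqrt_pow_comm by lra. fold p. rewrite <- (pow_1 p) at 1. apply Rle_pow; auto; lia.
      apply sqrt_le_1_alt; lra. }
    assert (Htj : t <= t ^ j). { rewrite <- (pow_1 t) at 1. apply Rle_pow; auto. }
    apply Rle_trans with (INR k / sqrt (t ^ m + 1) / t ^ j).
    { unfold Rdiv. apply Rmult_le_compat_r. left; apply Rinv_0_lt_compat; lra. unfold Rdiv in H1; lra. }
    pose proof (pos_INR k).
    unfold Rdiv. rewrite Rmult_assoc. apply Rmult_le_compat_l; auto.
    rewrite <- Rinv_mult. apply Rinv_le_contravar. nra. rewrite Rmult_comm. apply Rmult_le_compat; lra.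
Qed.

Lemma phi_pos m j k t : 0 < t -> 0 < phi m j k t.
Proof.
  intros Ht. unfold phi. apply Rmult_lt_0_compat. apply pow_lt; auto. apply exp_pos.
Qed.

Lemma psiS1_neg m j t : (1 <= j <= m)%nat -> 0 < t -> psiS m j 1 t < 0.
Proof.
  intros Hj Ht. unfold psiS. rewrite phi_form, R_form by (auto; lia).
  pose proof (pow_lt t m Ht). pose proof (pow_lt t j Ht).
  pose proof (I3 (t ^ m) H). rewrite pow_1.
  assert (0 < / t ^ j) by (apply Rinv_0_lt_compat; lra).
  set (X := t ^ m * sqrt (t ^ m + 1) / (t ^ m + 1) ^ 1) in *.
  assert (X < sqrt (t ^ m)) by (unfold X; rewrite pow_1; auto).
  unfold Rdiv. nra.
Qed.

Lemma sqrt_ge1 x : 1 <= x -> 1 <= sqrt x.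
Proof. intros H. pose proof (sqrt_le_1_alt 1 x H). rewrite sqrt_1 in H0; auto. Qed.
Lemma sqrt_le1 x : x <= 1 -> sqrt x <= 1.
Proof. intros H. pose proof (sqrt_le_1_alt x 1 H). rewrite sqrt_1 in H0; auto. Qed.

Lemma sqrt_le_self w : 1 <= w -> sqrt w <= w.
Proof.
  intros Hw. pose proof (sqrt_sqrt w ltac:(lra)).
  assert (1 <= sqrt w) by (first [apply sqrt_ge1 | apply sqrt_le1]; lra). nra.
Qed.

Lemma phi_bounds m j k : (3 <= m)%nat -> (1 <= j)%nat -> (m + 3 <= 2 * j)%nat -> (1 <= k)%nat ->
  (forall t, 0 < t -> t <= 1 -> Rabs (phi m j k t) <= 1 / sqrt t) /\
  (forall t, 1 <= t -> Rabs (phi m j k t) <= 1 / (t * sqrt t)).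
Proof.
  intros Hm Hj H2j Hk.
  assert (Hw1 : forall t, 0 < t -> sqrt (t ^ m + 1) / (t ^ m + 1) ^ k <= / sqrt (t ^ m + 1)).
  { intros t Ht. pose proof (pow_lt t m Ht).
    assert (Hu : 0 < sqrt (t ^ m + 1)) by (apply sqrt_lt_R0; lra).
    pose proof (sqrt_sqrt (t ^ m + 1) ltac:(lra)).
    assert (t ^ m + 1 <= (t ^ m + 1) ^ k). { rewrite <- (pow_1 (t ^ m + 1)) at 1. apply Rle_pow; auto; lra. }
    apply Rmult_le_reg_r with ((t ^ m + 1) ^ k * sqrt (t ^ m + 1)). nra.
    pose proof (pow_lt (t ^ m + 1) k ltac:(lra)).
    replace (sqrt (t ^ m + 1) / (t ^ m + 1) ^ k * ((t ^ m + 1) ^ k * sqrt (t ^ m + 1))) with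
      (sqrt (t ^ m + 1) * sqrt (t ^ m + 1)) by (field; lra). rewrite H0.
    replace (/ sqrt (t ^ m + 1) * ((t ^ m + 1) ^ k * sqrt (t ^ m + 1))) with ((t ^ m + 1) ^ k) by (field; lra).
    auto. }
  split.
  - intros t Ht Ht1. rewrite Rabs_right by (left; apply phi_pos; auto).
    pose proof (pow_lt t m Ht).
    assert (Hu1 : 1 <= sqrt (t ^ m + 1)) by (first [apply sqrt_ge1 | apply sqrt_le1]; lra).
    assert (Hs : sqrt t <= 1) by (first [apply sqrt_ge1 | apply sqrt_le1]; lra).
    pose proof (sqrt_lt_R0 t Ht).
    assert (1 <= 1 / sqrt t). { unfold Rdiv; rewrite Rmult_1_l, <- Rinv_1. apply Rinv_le_contravar; lra. }
    apply Rle_trans with 1; auto.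
    unfold phi. rewrite Rpower_neg_half by lra.
    assert (t ^ (m * k - j) <= 1) by (rewrite <- (pow1 (m * k - j)); apply pow_incr; lra).
    pose proof (pow_lt t (m * k - j) Ht).
    specialize (Hw1 t Ht).
    assert (/ sqrt (t ^ m + 1) <= 1) by (pose proof (Rinv_le_contravar 1 (sqrt (t ^ m + 1)) ltac:(lra) Hu1); rewrite Rinv_1 in *; lra).
    assert (0 <= sqrt (t ^ m + 1) / (t ^ m + 1) ^ k) by (apply div_nonneg; [apply sqrt_pos | apply pow_lt; lra]).
    nra.
  - intros t Ht1. assert (Ht : 0 < t) by lra. rewrite Rabs_right by (left; apply phi_pos; auto).
    destruct (sqrt_t_facts t Ht) as [Hp Hpp].
    assert (Hp1 : 1 <= sqrt t). { first [apply sqrt_ge1 | apply sqrt_le1]; lra. }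
    pose proof (pow_lt t m Ht). pose proof (pow_lt t j Ht).
    assert (Hp3 : t * sqrt t = sqrt t ^ 3) by (simpl; rewrite Rmult_1_r, Hpp; ring).
    rewrite Hp3.
    destruct (Nat.le_gt_cases j (m * k)) as [Hjk|Hjk].
    + rewrite phi_form by auto.
      pose proof (I1 (t ^ m) k ltac:(lra) Hk).
      apply Rle_trans with (sqrt (t ^ m) / t ^ j).
      { unfold Rdiv. apply Rmult_le_compat_r. left; apply Rinv_0_lt_compat; lra. unfold Rdiv in H1; lra. }
      rewrite <- sqrt_pow_comm by lra.
      assert (Et : t ^ j = sqrt t ^ (2 * j)). { rewrite pow_mult. simpl. rewrite Rmult_1_r, Hpp. reflexivity. }
      rewrite Et. set (p := sqrt t) in *. pose proof (pow_lt p (2 * j) Hp). pose proof (pow_lt p 3 Hp).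
      apply Rmult_le_reg_r with (p ^ (2 * j) * p ^ 3). nra.
      replace (p ^ m / p ^ (2 * j) * (p ^ (2 * j) * p ^ 3)) with (p ^ (m + 3)) by (rewrite pow_add; field; lra).
      replace (1 / p ^ 3 * (p ^ (2 * j) * p ^ 3)) with (p ^ (2 * j)) by (field; lra).
      apply Rle_pow; auto.
    + unfold phi. replace (m * k - j)%nat with 0%nat by lia. rewrite pow_O, Rmult_1_l.
      rewrite Rpower_neg_half by lra.
      eapply Rle_trans. apply Hw1; auto.
      assert (sqrt t ^ 3 <= sqrt (t ^ m + 1)).
      { apply Rle_trans with (sqrt t ^ m). apply Rle_pow; auto.
        rewrite sqrt_pow_comm by lra. apply sqrt_le_1_alt; lra. }
      pose proof (pow_lt (sqrt t) 3 Hp).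
      unfold Rdiv. rewrite Rmult_1_l. apply Rinv_le_contravar; lra.
Qed.

Lemma CInt_sum {A} (psi : A -> R -> R) (I : A -> R) (c : A -> Cplx) l :
  (forall k, In k l -> is_int_0_inf (psi k) (I k)) ->
  CInt0inf (fun t => Csum (fun k => Cscale (psi k t) (c k)) l) = Csum (fun k => Cscale (I k) (c k)) l.
Proof.
  intros H.
  assert (G : is_int_0_inf (fun t => fst (Csum (fun k => Cscale (psi k t) (c k)) l)) (fst (Csum (fun k => Cscale (I k) (c k)) l))
           /\ is_int_0_inf (fun t => snd (Csum (fun k => Cscale (psi k t) (c k)) l)) (snd (Csum (fun k => Cscale (I k) (c k)) l))).
  { induction l as [|k l IH].
    - simpl. split; apply is_int_zero.
    - assert (Hk : is_int_0_inf (psi k) (I k)) by (apply H; simpl; auto).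
      destruct IH as [IH1 IH2]. intros; apply H; simpl; auto.
      simpl. split.
      + apply (is_int_lin (psi k) _ _ (fst (c k)) _ _ Hk IH1). intros; reflexivity.
      + apply (is_int_lin (psi k) _ _ (snd (c k)) _ _ Hk IH2). intros; reflexivity. }
  destruct G as [G1 G2]. unfold CInt0inf. rewrite (Int0inf_eq _ _ G1), (Int0inf_eq _ _ G2).
  destruct (Csum (fun k => Cscale (I k) (c k)) l); reflexivity.
Qed.


Definition psi m j k := if Nat.leb (2 * j) (m + 1) then psiS m j k else phi m j k.

Lemma psi_int m j k : (3 <= m)%nat -> (1 <= j)%nat -> (2 * j <> m + 2)%nat -> (1 <= k)%nat ->
  is_int_0_inf (psi m j k) (Int0inf (psi m j k)).
Proof.
  intros Hm Hj Hne Hk.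
  assert (E : exists l, is_int_0_inf (psi m j k) l).
  { unfold psi. destruct (Nat.leb (2 * j) (m + 1)) eqn:E.
    - apply Nat.leb_le in E. destruct (psiS_bounds m j k Hm Hj E Hk) as [B1 B2].
      apply (int_exists _ 1 (INR k) (cont_psiS m j k)); auto.
    - apply Nat.leb_gt in E. destruct (phi_bounds m j k Hm Hj ltac:(lia) Hk) as [B1 B2].
      apply (int_exists _ 1 1 (cont_phi m j k)); auto. }
  destruct E as [l Hl]. rewrite (Int0inf_eq _ _ Hl). auto.
Qed.

Lemma Csum_scale_minus {A} (f : A -> R) r (c : A -> Cplx) l :
  Csum (fun k => Cscale (f k - r) (c k)) l = Csub (Csum (fun k => Cscale (f k) (c k)) l) (Cscale r (Csum c l)).
Proof.
  induction l; simpl.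
  - unfold Csub, Cscale, Cadd, C0; simpl; f_equal; ring.
  - rewrite IHl. rewrite !Cscale_mul, RtoC_minus. unfold Csub. rewrite !Cscale_mul. ring.
Qed.

Lemma Kmj_repr m a j : (3 <= m)%nat -> (1 <= j)%nat -> (2 * j <> m + 2)%nat ->
  Kmj m a j = Csum (fun k => Cscale (Int0inf (psi m j k)) (bjk m a j k)) (seq 1 j).
Proof.
  intros Hm Hj Hne. unfold Kmj.
  replace (Nat.eqb j 0) with false by (symmetry; apply Nat.eqb_neq; lia).
  assert (Hint : forall k, In k (seq 1 j) -> is_int_0_inf (psi m j k) (Int0inf (psi m j k))).
  { intros k Hk. apply in_seq in Hk. apply psi_int; auto; lia. }
  destruct (Nat.leb (2 * j) (m + 1)) eqn:E.
  - rewrite <- (CInt_sum (psi m j) (fun k => Int0inf (psi m j k)) (bjk m a j) (seq 1 j) Hint).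
    f_equal. apply functional_extensionality; intros t.
    unfold psi. rewrite E. unfold psiS. rewrite Csum_scale_minus. reflexivity.
  - replace (andb (Nat.even m) (Nat.eqb (2 * j) (m + 2))) with false
      by (symmetry; apply Bool.andb_false_iff; right; apply Nat.eqb_neq; auto).
    rewrite <- (CInt_sum (psi m j) (fun k => Int0inf (psi m j k)) (bjk m a j) (seq 1 j) Hint).
    f_equal. apply functional_extensionality; intros t.
    unfold psi. rewrite E. reflexivity.
Qed.

Lemma cj_repr m a j : (3 <= m)%nat -> (1 <= j)%nat -> (2 * j <> m + 2)%nat ->
  cj m j a = Cscale (/ PI * cos ((INR j - 1) * PI / INR m))
     (Csum (fun k => Cscale (Int0inf (psi m j k)) (bjk m a j k)) (seq 1 j)).
Proof.
  intros Hm Hj Hne. unfold cj.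
  replace (andb (Nat.even m) (Nat.eqb (2 * j) (m + 2))) with false
      by (symmetry; apply Bool.andb_false_iff; right; apply Nat.eqb_neq; auto).
  rewrite Kmj_repr; auto.
Qed.

Lemma cj_special m a j : (2 * j = m + 2)%nat ->
  cj m j a = Cscale (- / INR m) (Csum (fun k => bjk m a j k) (seq 1 j)).
Proof.
  intros He. assert (Hm : m = (2 * (j - 1))%nat) by lia.
  assert (Ev : Nat.even m = true) by (rewrite Hm, Nat.even_mul; reflexivity).
  unfold cj. rewrite Ev. replace (Nat.eqb (2 * j) (m + 2)) with true by (symmetry; apply Nat.eqb_eq; auto).
  simpl andb. unfold nu. rewrite Ev.
  replace (m / 2 + 1)%nat with j. reflexivity.
  rewrite Hm, Nat.mul_comm, Nat.div_mul by lia. lia.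
Qed.

Lemma bjk_poly m j k : is_poly_fun m (fun a => bjk m a j k).
Proof.
  unfold bjk. destruct (Nat.ltb (m * k) j).
  - apply poly_const.
  - apply poly_scale, poly_ppow.
Qed.

Lemma bjk_dep m a a' j k : (1 <= m)%nat -> (1 <= k)%nat -> (forall i, (1 <= i <= j)%nat -> a i = a' i) ->
  bjk m a j k = bjk m a' j k.
Proof.
  intros Hm Hk H. unfold bjk. destruct (Nat.ltb (m * k) j) eqn:E. reflexivity.
  apply Nat.ltb_ge in E. f_equal. apply (ppow_dep m a a' j); auto.
  rewrite Nat.mul_sub_distr_r, Nat.mul_1_l. assert (k <= m * k)%nat by nia. lia.
Qed.

Lemma bjk_upd2 m a j k x : (1 <= j)%nat -> (2 <= k)%nat -> bjk m (upd a j x) j k = bjk m a j k.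
Proof.
  intros Hj Hk. unfold bjk. destruct (Nat.ltb (m * k) j) eqn:E. reflexivity.
  apply Nat.ltb_ge in E. f_equal. apply (ppow_dep m (upd a j x) a (j - 1)).
  - intros i Hi. unfold upd. replace (Nat.eqb i j) with false by (symmetry; apply Nat.eqb_neq; lia). auto.
  - rewrite Nat.mul_sub_distr_r, Nat.mul_1_l. assert (k <= m * k)%nat by (destruct m; [simpl in E; lia | simpl; lia]). lia.
Qed.

Lemma binom_half_1 : binom_half 1 = 1 / 2.
Proof. unfold binom_half, falling. simpl. field. Qed.

Lemma bjk_upd1 m a j x : (1 <= j <= m)%nat -> bjk m (upd a j x) j 1 = Cscale (1 / 2) x.
Proof.
  intros Hj. unfold bjk. replace (Nat.ltb (m * 1) j) with false by (symmetry; apply Nat.ltb_ge; lia).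
  rewrite binom_half_1. f_equal. simpl ppow. rewrite pmul_one.
  rewrite pcoef_Ppoly_lt by lia. unfold upd. replace (m - (m * 1 - j))%nat with j by lia.
  rewrite Nat.eqb_refl. reflexivity.
Qed.

Lemma Ipsi1_nz m j : (3 <= m)%nat -> (1 <= j <= m)%nat -> (2 * j <> m + 2)%nat -> Int0inf (psi m j 1) <> 0.
Proof.
  intros Hm Hj Hne. pose proof (psi_int m j 1 Hm ltac:(lia) Hne ltac:(lia)) as H.
  unfold psi in *. destruct (Nat.leb (2 * j) (m + 1)) eqn:E.
  - assert (Int0inf (psiS m j 1) < 0).
    { apply (is_int_neg _ _ (cont_psiS m j 1) H). intros; apply psiS1_neg; auto. }
    lra.
  - assert (0 < Int0inf (phi m j 1)).
    { apply (is_int_pos _ _ (cont_phi m j 1) H). intros; apply phi_pos; auto. }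
    lra.
Qed.

Lemma cos_nz m j : (3 <= m)%nat -> (1 <= j <= m)%nat -> (2 * j <> m + 2)%nat ->
  cos ((INR j - 1) * PI / INR m) <> 0.
Proof.
  intros Hm Hj Hne.
  destruct j as [|n]. lia.
  rewrite S_INR. replace (INR n + 1 - 1) with (INR n) by ring.
  assert (HmR : 3 <= INR m) by (pose proof (le_INR 3 m Hm) as HH; simpl in HH; lra).
  pose proof PI_RGT_0. pose proof (pos_INR n).
  destruct (Nat.lt_ge_cases (2 * n) m) as [Hlt|Hge].
  - apply lt_INR in Hlt. rewrite mult_INR in Hlt. simpl (INR 2) in Hlt.
    assert (0 < cos (INR n * PI / INR m)); [|lra].
    apply cos_gt_0.
    + assert (0 <= INR n * PI / INR m) by (apply div_nonneg; [nra | lra]). lra.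
    + apply Rmult_lt_reg_r with (2 * INR m). lra.
      replace (INR n * PI / INR m * (2 * INR m)) with (2 * INR n * PI) by (field; lra).
      replace (PI / 2 * (2 * INR m)) with (INR m * PI) by field. nra.
  - assert (Hgt : (m < 2 * n)%nat) by lia. apply lt_INR in Hgt. rewrite mult_INR in Hgt. simpl (INR 2) in Hgt.
    assert (Hnm : (n < m)%nat) by lia. apply lt_INR in Hnm.
    assert (cos (INR n * PI / INR m) < 0); [|lra].
    apply cos_lt_0.
    + apply Rmult_lt_reg_r with (2 * INR m). lra.
      replace (INR n * PI / INR m * (2 * INR m)) with (2 * INR n * PI) by (field; lra).
      replace (PI / 2 * (2 * INR m)) with (INR m * PI) by field. nra.
    + apply Rmult_lt_reg_r with (INR m). lra.
      replace (INR n * PI / INR m * INR m) with (INR n * PI) by (field; lra). nra.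
Qed.

Lemma RtoC_nz r : r <> 0 -> RtoC r <> C0.
Proof. intros H E. apply H. unfold RtoC, C0 in E. injection E; auto. Qed.

Lemma c0_indep m a a' : cj m 0 a = cj m 0 a'.
Proof.
  unfold cj. replace (Nat.eqb (2 * 0) (m + 2)) with false by (symmetry; apply Nat.eqb_neq; lia).
  rewrite Bool.andb_false_r. reflexivity.
Qed.

Theorem mainTheorem6 (m : nat) (hm : (3 <= m)%nat) :
  (* (i) each c_j, 0 <= j <= m+1, is a polynomial in a_1..a_m *)
  (forall j : nat, (j <= m + 1)%nat -> is_poly_fun m (cj m j)) /\
  (* (ii) c_0 is independent of a *)
  (forall a a' : nat -> Cplx, cj m 0 a = cj m 0 a') /\
  (* (iii) for 1 <= j <= m: depends only on a_1..a_j, and is a non-constant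
     affine-linear function of a_j *)
  (forall j : nat, (1 <= j <= m)%nat ->
     (forall a a' : nat -> Cplx,
        (forall i : nat, (1 <= i <= j)%nat -> a i = a' i) -> cj m j a = cj m j a') /\
     (forall a : nat -> Cplx, exists alpha beta : Cplx,
        alpha <> C0 /\
        forall x : Cplx, cj m j (upd a j x) = Cadd (Cmul alpha x) beta)).
Proof.
  split; [|split].
  - intros j Hj. destruct (Nat.eq_dec j 0) as [->|Hj0].
    + apply (poly_ext m (fun _ => cj m 0 (fun _ => C0))). intros a; apply c0_indep. apply poly_const.
    + destruct (Nat.eq_dec (2 * j) (m + 2)) as [He|Hne].
      * apply (poly_ext m (fun a => Cscale (- / INR m) (Csum (fun k => bjk m a j k) (seq 1 j)))).
        intros a; rewrite cj_special; auto.
        apply poly_scale. apply (poly_Csum m (fun k a => bjk m a j k)). intros; apply bjk_poly.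
      * apply (poly_ext m (fun a => Cscale (/ PI * cos ((INR j - 1) * PI / INR m))
            (Csum (fun k => Cscale (Int0inf (psi m j k)) (bjk m a j k)) (seq 1 j)))).
        intros a; rewrite cj_repr; auto; lia.
        apply poly_scale. apply (poly_Csum m (fun k a => Cscale (Int0inf (psi m j k)) (bjk m a j k))).
        intros; apply poly_scale, bjk_poly.
  - apply c0_indep.
  - intros j Hj. split.
    + intros a a' H. destruct (Nat.eq_dec (2 * j) (m + 2)) as [He|Hne].
      * rewrite !cj_special by auto. f_equal. apply Csum_ext. intros k Hk. apply in_seq in Hk.
        apply bjk_dep; auto; lia.
      * rewrite !cj_repr by (auto; lia). f_equal. apply Csum_ext. intros k Hk. apply in_seq in Hk.
        f_equal. apply bjk_dep; auto; lia.
    + intros a. destruct j as [|j']. lia.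
      destruct (Nat.eq_dec (2 * S j') (m + 2)) as [He|Hne].
      * exists (RtoC (- / INR m * (1 / 2))).
        exists (Cscale (- / INR m) (Csum (fun k => bjk m a (S j') k) (seq 2 j'))).
        split.
        { apply RtoC_nz. assert (0 < INR m) by (apply lt_0_INR; lia).
          assert (0 < / INR m) by (apply Rinv_0_lt_compat; auto). lra. }
        intros x. rewrite cj_special by auto. cbn [seq]. cbn [Csum fold_right].
        fold (Csum (fun k => bjk m (upd a (S j') x) (S j') k) (seq 2 j')).
        rewrite bjk_upd1 by lia.
        rewrite (Csum_ext (fun k => bjk m (upd a (S j') x) (S j') k) (fun k => bjk m a (S j') k)).
        2:{ intros k Hk. apply in_seq in Hk. apply bjk_upd2; lia. }
        rewrite !Cscale_mul, RtoC_mult. ring.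
      * set (r := / PI * cos ((INR (S j') - 1) * PI / INR m)).
        set (I1 := Int0inf (psi m (S j') 1)).
        exists (RtoC (r * I1 * (1 / 2))).
        exists (Cscale r (Csum (fun k => Cscale (Int0inf (psi m (S j') k)) (bjk m a (S j') k)) (seq 2 j'))).
        split.
        { apply RtoC_nz. unfold r, I1.
          pose proof (cos_nz m (S j') hm Hj Hne). pose proof (Ipsi1_nz m (S j') hm Hj Hne).
          pose proof (Rinv_neq_0_compat PI PI_neq0).
          repeat apply Rmult_integral_contrapositive_currified; auto. lra. }
        intros x. rewrite cj_repr by (auto; lia). fold r. cbn [seq]. cbn [Csum fold_right].
        fold (Csum (fun k => Cscale (Int0inf (psi m (S j') k)) (bjk m (upd a (S j') x) (S j') k)) (seq 2 j')).
        rewrite bjk_upd1 by lia.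
        rewrite (Csum_ext (fun k => Cscale (Int0inf (psi m (S j') k)) (bjk m (upd a (S j') x) (S j') k))
                          (fun k => Cscale (Int0inf (psi m (S j') k)) (bjk m a (S j') k))).
        2:{ intros k Hk. apply in_seq in Hk. rewrite bjk_upd2; auto; lia. }
        fold I1. rewrite !Cscale_mul, !RtoC_mult. ring.
Qed.
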